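(* Let $S$ be a semibounded relation in $\mathfrak H$ with lower bound $\gamma\in\mathbb R$ and let $c\le\gamma$. Then: (a) $S_{{\rm K},c}=\{\{\varphi,\varphi'\}\in S^*:\varphi'-c\varphi\in\mathrm{dom}\,\bar{\mathfrak t}((S-c)^{-1})\}$; and if $H$ is a selfadjoint extension of $S$ with $\mathrm{ran}\,(H-c)\subset\mathrm{dom}\,\bar{\mathfrak t}((S-c)^{-1})$, then $H=S_{{\rm K},c}$. (b) $S_{{\rm k},c}=S\,\widehat+\,\widehat{\mathfrak N}_c(S^* )$; and if $H$ is a symmetric extension of $S$ with $\mathrm{ran}\,(H-c)\subset\mathrm{ran}\,(S-c)$, then $H\subset S_{{\rm k},c}$. (c) For every $c<\gamma$, $S_{{\rm K},c}=\overline S\,\widehat+\,\widehat{\mathfrak N}_c(S^* )$; and $S_{{\rm k},\gamma}=S_{{\rm K},\gamma}$ holds if and only if $\mathrm{ran}\,(S-\gamma)=\overline{\mathrm{ran}}\,(S-\gamma)\cap\mathrm{ran}\,(S^*-\gamma)$; in particular it holds if $\mathrm{ran}\,(S-\gamma)$ is closed.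
   Context: Linear relations in $\mathfrak H$ are linear subspaces of $\mathfrak H\times\mathfrak H$; $T^*$ adjoint relation, $T^{**}=\overline T$ the closure, $T^{-1}=\{\{g,f\}:\{f,g\}\in T\}$, $RT=\{\{f,h\}:\exists g,\{f,g\}\in T,\{g,h\}\in R\}$, $T-c=\{\{f,g-cf\}:\{f,g\}\in T\}$, $c+T=\{\{f,g+cf\}\}$, $A\,\widehat+\,B=\{\{f+h,g+k\}:\{f,g\}\in A,\{h,k\}\in B\}$, $\widehat{\mathfrak N}_c(S^* )=\{\{f,cf\}:f\in\ker(S^*-c)\}$. Symmetric: $T\subset T^*$; selfadjoint: $T=T^*$. $S$ is semibounded with lower bound $\gamma$ if $\gamma$ is the supremum of all $c$ with $(\varphi',\varphi)\ge c\|\varphi\|^2$ on $S$. For a semibounded relation $T$, $\mathfrak t(T)[\varphi,\psi]=(\varphi',\psi)$ on $\mathrm{dom}\,T$; it is closable with closure $\bar{\mathfrak t}(T)$; here $\mathrm{dom}\,\mathfrak t((S-c)^{-1})=\mathrm{ran}\,(S-c)$. A representing map for $\mathfrak t(S)-c$ is a linear operator $Q_c$ into a Hilbert space with $\mathrm{dom}\,Q_c=\mathrm{dom}\,S$ and $\mathfrak t(S)[\varphi,\psi]=c(\varphi,\psi)+(Q_c\varphi,Q_c\psi)$; its companion relation is $J_c=\{\{Q_c\varphi,\varphi'-c\varphi\}:\{\varphi,\varphi'\}\in S\}$. The Kreĭn type extension is $S_{{\rm K},c}=c+J_c^{**}J_c^*$ and the weak Kreĭn type extension is $S_{{\rm k},c}=c+J_cJ_c^*$;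 both are independent of the choice of $Q_c$ and $S\subset S_{{\rm k},c}\subset S_{{\rm K},c}$. *)

(* Defs.v *)
From mathcomp Require Import all_boot all_order all_algebra.
From mathcomp Require Import complex reals.
From mathcomp Require Import classical_sets.
Import Order.TTheory GRing.Theory Num.Theory.

Set Implicit Arguments.
Unset Strict Implicit.
Unset Printing Implicit Defensive.

Local Open Scope ring_scope.
Local Open Scope classical_set_scope.

Section LinearRelations.
Variable R : realType.
Local Notation C := R[i].

Section Space.
Variables (V : lmodType C) (ip : V -> V -> C).

Definition cvg_seq (u : nat -> V) (x : V) : Prop :=
  forall e : R, 0 < e -> exists N : nat, forall n : nat, (N <= n)%N ->
    ip (u n - x) (u n - x) < (e%:C)%C.

Definition cauchy_seq (u : nat -> V) : Prop :=
  forall e : R, 0 < e -> exists N : nat, forall n m : nat,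
    (N <= n)%N -> (N <= m)%N -> ip (u n - u m) (u n - u m) < (e%:C)%C.

Definition is_hilbert : Prop :=
  [/\ (forall (a : C) (x y z : V), ip (a *: x + y) z = a * ip x z + ip y z),
      (forall x y : V, ip y x = conjc (ip x y)),
      (forall x : V, 0 <= ip x x),
      (forall x : V, ip x x = 0 -> x = 0)
    & (forall u : nat -> V, cauchy_seq u -> exists x, cvg_seq u x)].

Definition closure_set (A : set V) : set V :=
  [set x | exists u : nat -> V, (forall n, A (u n)) /\ cvg_seq u x].
End Space.

Section Rel.
Variables (A B : lmodType C).

Definition is_linrel (T : set (A * B)) : Prop :=
  T (0, 0) /\
  (forall (a : C) (p q : A * B), T p -> T q ->
     T (a *: p.1 + q.1, a *: p.2 + q.2)).

Definition domr (T : set (A * B)) : set A := [set f | exists g, T (f, g)].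
Definition ranr (T : set (A * B)) : set B := [set g | exists f, T (f, g)].

Definition invr (T : set (A * B)) : set (B * A) := [set p | T (p.2, p.1)].

Definition adjr (ipA : A -> A -> C) (ipB : B -> B -> C) (T : set (A * B))
  : set (B * A) :=
  [set p | forall q, T q -> ipB q.2 p.1 = ipA q.1 p.2].
End Rel.

Definition compr (A B D : lmodType C) (Rl : set (B * D)) (T : set (A * B))
  : set (A * D) :=
  [set p | exists g, T (p.1, g) /\ Rl (g, p.2)].

Section Endo.
Variables (V : lmodType C) (ip : V -> V -> C).

Definition shiftr (T : set (V * V)) (c : C) : set (V * V) :=
  [set p | exists q, T q /\ p = (q.1, q.2 - c *: q.1)].
Definition plusr (c : C) (T : set (V * V)) : set (V * V) :=
  [set p | exists q, T q /\ p = (q.1, q.2 + c *: q.1)].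

Definition csum (T1 T2 : set (V * V)) : set (V * V) :=
  [set p | exists q1 q2, T1 q1 /\ T2 q2 /\ p = (q1.1 + q2.1, q1.2 + q2.2)].

Definition hatN (c : C) (T : set (V * V)) : set (V * V) :=
  [set p | shiftr T c (p.1, 0) /\ p.2 = c *: p.1].

Definition closure_rel (T : set (V * V)) : set (V * V) :=
  [set p | exists u : nat -> V * V, (forall n, T (u n)) /\
     cvg_seq ip (fun n => (u n).1) p.1 /\ cvg_seq ip (fun n => (u n).2) p.2].

Definition lb_set (T : set (V * V)) : set R :=
  [set c | forall p, T p -> (c%:C)%C * ip p.1 p.1 <= ip p.2 p.1].

Definition semibounded_lb (T : set (V * V)) (gamma : R) : Prop :=
  is_linrel T /\
  (forall c, lb_set T c -> c <= gamma) /\ (forall b, (forall c, lb_set T c -> c <= b) -> gamma <= b).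

(* domain of the closure of the (closable) form t(T)[phi,psi] = (phi',psi)
   of a semibounded relation T: phi such that there are {phi_n, phi_n'} in T
   with phi_n -> phi and t[phi_n - phi_m] -> 0 *)
Definition dom_formcl (T : set (V * V)) : set V :=
  [set x | exists u : nat -> V * V, (forall n, T (u n)) /\
     cvg_seq ip (fun n => (u n).1) x /\
     forall e : R, 0 < e -> exists N : nat, forall n m : nat,
       (N <= n)%N -> (N <= m)%N ->
       `| ip ((u n).2 - (u m).2) ((u n).1 - (u m).1) | < (e%:C)%C].

Definition symmetricr (T : set (V * V)) : Prop := T `<=` adjr ip ip T.
Definition selfadjointr (T : set (V * V)) : Prop := T = adjr ip ip T.
End Endo.

Section Krein.
Variables (V : lmodType C) (ip : V -> V -> C).
Variables (K : lmodType C) (ipK : K -> K -> C).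

Definition repr_map (S : set (V * V)) (c : R) (Q : V -> K) : Prop :=
  (forall (a : C) (x y : V), domr S x -> domr S y ->
     Q (a *: x + y) = a *: Q x + Q y) /\
  (forall p y, S p -> domr S y ->
     ip p.2 y = (c%:C)%C * ip p.1 y + ipK (Q p.1) (Q y)).

Definition companion (S : set (V * V)) (c : R) (Q : V -> K) : set (K * V) :=
  [set p | exists q, S q /\ p = (Q q.1, q.2 - (c%:C)%C *: q.1)].

(* S_{K,c} = c + J_c^** J_c^*  and  S_{k,c} = c + J_c J_c^* *)
Definition kreinK (S : set (V * V)) (c : R) (Q : V -> K) : set (V * V) :=
  let J := companion S c Q in
  plusr (c%:C)%C (compr (adjr ip ipK (adjr ipK ip J)) (adjr ipK ip J)).

Definition kreink (S : set (V * V)) (c : R) (Q : V -> K) : set (V * V) :=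
  let J := companion S c Q in
  plusr (c%:C)%C (compr J (adjr ipK ip J)).
End Krein.
End LinearRelations.

(* Main.v *)
Require Import Defs.
From mathcomp Require Import all_boot all_order all_algebra.
From mathcomp Require Import complex reals classical_sets boolp.
From mathcomp Require Import ring lra.
Import Order.TTheory GRing.Theory Num.Theory.
Local Open Scope ring_scope.
Local Open Scope classical_set_scope.

Set Implicit Arguments.
Unset Strict Implicit.
Unset Printing Implicit Defensive.

Lemma subrACA' (G : zmodType) (a b d e : G) : a - b - (d - e) = a - d - (b - e).
Proof. rewrite !opprB -!addrA; congr (_ + _); rewrite addrCA [in RHS]addrCA; congr (_ + _); exact: addrC. Qed.

Section Cplx.
Variable R : realType.
Local Notation C := R[i].
Local Notation Rc := complex.Re.
Local Notation Ic := complex.Im.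

Definition sqc (z : C) : R := Rc z ^+ 2 + Ic z ^+ 2.

Lemma sqc_ge0 z : 0 <= sqc z.
Proof. rewrite /sqc; nra. Qed.

Lemma sqc_eq0 z : sqc z = 0 -> z = 0.
Proof.
case: z => a b; rewrite /sqc /= => h.
have ha : a = 0 by nra.
have hb : b = 0 by nra.
by rewrite ha hb.
Qed.

Lemma conjM_sqc z : (z^* * z)%C = ((sqc z)%:C)%C.
Proof. case: z => a b; rewrite /sqc /=; apply/eqP; rewrite eq_complex /=; apply/andP; split; apply/eqP; ring. Qed.

Lemma sqcB_le (x y : C) : sqc (x + y) <= 2 * (sqc x + sqc y).
Proof. case: x => a b; case: y => c d; rewrite /sqc /=. have := sqr_ge0 (a - c); have := sqr_ge0 (b - d); nra. Qed.

Lemma ReD (x y : C) : Rc (x + y) = Rc x + Rc y. Proof. by case: x => a b; case: y => c d. Qed.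
Lemma ImD (x y : C) : Ic (x + y) = Ic x + Ic y. Proof. by case: x => a b; case: y => c d. Qed.
Lemma ReN (x : C) : Rc (- x) = - Rc x. Proof. by case: x. Qed.
Lemma ReB (x y : C) : Rc (x - y) = Rc x - Rc y. Proof. by rewrite ReD ReN. Qed.
Lemma Re_real (k : R) : Rc ((k%:C)%C) = k. Proof. by []. Qed.
Lemma Re_conj (x : C) : Rc (x^*)%C = Rc x. Proof. by case: x. Qed.
Lemma ReM_real (k : R) (x : C) : Rc ((k%:C)%C * x) = k * Rc x.
Proof. case: x => a b /=; ring. Qed.

Lemma conj_real (k : R) : ((k%:C)^*)%C = (k%:C)%C.
Proof. by rewrite /= oppr0. Qed.

Lemma real_of_ge0 (z : C) : 0 <= z -> z = ((Rc z)%:C)%C.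
Proof. case: z => a b; rewrite lecE /= => /andP[/eqP -> _]. by []. Qed.

Lemma ltcR' (a b : R) : (((a%:C)%C : C) < (b%:C)%C) = (a < b).
Proof. by rewrite ltcR. Qed.

Lemma sqcN (x : C) : sqc (- x) = sqc x.
Proof. case: x => a b; rewrite /sqc /=; ring. Qed.

Lemma sqc_sub_sym (x y : C) : sqc (x - y) = sqc (y - x).
Proof. by rewrite -sqcN opprB. Qed.

Lemma sqcM (x y : C) : sqc (x * y) = sqc x * sqc y.
Proof. case: x => a b; case: y => c d; rewrite /sqc /=; ring. Qed.

Lemma Re_sq_le (z : C) : Rc z ^+ 2 <= sqc z.
Proof. rewrite /sqc; nra. Qed.

Lemma sqc_conj (x : C) : sqc (x^*)%C = sqc x.
Proof. case: x => a b; rewrite /sqc /=; ring. Qed.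

Lemma conjD (x y : C) : ((x + y)^* = x^* + y^*)%C.
Proof. case: x => a b; case: y => c d; apply/eqP; rewrite eq_complex /=; apply/andP; split; apply/eqP; ring. Qed.
Lemma conjN (x : C) : ((- x)^* = - x^*)%C.
Proof. case: x => a b; apply/eqP; rewrite eq_complex /=; apply/andP; split; apply/eqP; ring. Qed.
Lemma conjB (x y : C) : ((x - y)^* = x^* - y^*)%C.
Proof. case: x => a b; case: y => c d; apply/eqP; rewrite eq_complex /=; apply/andP; split; apply/eqP; ring. Qed.
Lemma conjM (x y : C) : ((x * y)^* = x^* * y^*)%C.
Proof. case: x => a b; case: y => c d; apply/eqP; rewrite eq_complex /=; apply/andP; split; apply/eqP; ring. Qed.
Lemma conj0 : ((0 : C)^* = 0)%C.
Proof. by apply/eqP; rewrite eq_complex /= oppr0 !eqxx. Qed.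
Lemma conjK (x : C) : ((x^*)^* = x)%C.
Proof. case: x => a b; apply/eqP; rewrite eq_complex /= opprK !eqxx. by []. Qed.

Lemma Re_conj_kw (k : R) (w : C) : Rc ((((k%:C)%C * w)^*)%C * w) = k * sqc w.
Proof. case: w => a b; rewrite /sqc /=; ring. Qed.
Lemma sqc_kw (k : R) (w : C) : sqc ((k%:C)%C * w) = k ^+ 2 * sqc w.
Proof. case: w => a b; rewrite /sqc /=; ring. Qed.

Lemma conj_lin (k : R) (a b : C) : ((k%:C)%C * a^* + b^*)%C = (((k%:C)%C * a + b)^*)%C.
Proof. case: a => a1 a2; case: b => b1 b2; apply/eqP; rewrite eq_complex /=; apply/andP; split; apply/eqP; ring. Qed.

Definition scvg (z : nat -> C) (l : C) :=
  forall e : R, 0 < e -> exists N, forall n, (N <= n)%N -> sqc (z n - l) < e.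

Lemma scvg_uniq z l l' : scvg z l -> scvg z l' -> l = l'.
Proof.
move=> h1 h2; apply/eqP; rewrite -subr_eq0; apply/eqP; apply: sqc_eq0.
apply/eqP; rewrite eq_le sqc_ge0 andbT; apply/negPn/negP; rewrite -ltNge => hp.
have e4 : 0 < sqc (l - l') / 4 by rewrite divr_gt0.
have [N1 hN1] := h1 _ e4; have [N2 hN2] := h2 _ e4.
have a1 := hN1 (maxn N1 N2) (leq_maxl _ _).
have a2 := hN2 (maxn N1 N2) (leq_maxr _ _).
have := sqcB_le (l - z (maxn N1 N2)) (z (maxn N1 N2) - l').
rewrite (sqc_sub_sym l) addrA subrK => hh.
have : sqc (l - l') < sqc (l - l') by lra.
by rewrite ltxx.
Qed.

Lemma scvg_ext z w l : (forall n, z n = w n) -> scvg z l -> scvg w l.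
Proof. by move=> e h x /h [N hN]; exists N => n /hN; rewrite e. Qed.

Lemma scvg_cst l : scvg (fun _ => l) l.
Proof. by move=> e he; exists 0%N => n _; rewrite subrr /sqc /= expr0n /=; lra. Qed.

Lemma scvgD z w l l' : scvg z l -> scvg w l' -> scvg (fun n => z n + w n) (l + l').
Proof.
move=> h1 h2 e he.
have e4 : 0 < e / 4 by rewrite divr_gt0.
have [N1 hN1] := h1 _ e4; have [N2 hN2] := h2 _ e4.
exists (maxn N1 N2) => n hn.
have a1 := hN1 n (leq_trans (leq_maxl _ _) hn).
have a2 := hN2 n (leq_trans (leq_maxr _ _) hn).
have := sqcB_le (z n - l) (w n - l').
have -> : z n - l + (w n - l') = z n + w n - (l + l') by rewrite opprD; ring.
lra.
Qed.

Lemma scvg_eq z w l l' : (forall n, z n = w n) -> scvg z l -> scvg w l' -> l = l'.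
Proof. by move=> e h1 h2; apply: scvg_uniq (scvg_ext e h1) h2. Qed.

End Cplx.
Section Hil.
Variable R : realType.
Local Notation C := R[i].
Local Notation Rc := complex.Re.
Local Notation Ic := complex.Im.
Variables (W : lmodType C) (ip : W -> W -> C).
Hypothesis HH : is_hilbert ip.

Lemma ipL a x y z : ip (a *: x + y) z = a * ip x z + ip y z.
Proof. by move: HH; rewrite /is_hilbert; case. Qed.
Lemma ipC x y : ip y x = ((ip x y)^*)%C.
Proof. by move: HH; rewrite /is_hilbert; case. Qed.
Lemma ipP x : 0 <= ip x x.
Proof. by move: HH; rewrite /is_hilbert; case. Qed.
Lemma ipDef x : ip x x = 0 -> x = 0.
Proof. by move: HH; rewrite /is_hilbert; case=> _ _ _ d _; apply: d. Qed.

Lemma ip0l x : ip 0 x = 0.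
Proof.
have := ipL 1 0 0 x; rewrite scaler0 addr0 mul1r => h.
by apply: (addrI (ip 0 x)); rewrite addr0 -h.
Qed.
Lemma ip0r x : ip x 0 = 0.
Proof. by rewrite ipC ip0l conj0. Qed.
Lemma ipDl x y z : ip (x + y) z = ip x z + ip y z.
Proof. by rewrite -[x]scale1r ipL mul1r scale1r. Qed.
Lemma ipZl a x z : ip (a *: x) z = a * ip x z.
Proof. by rewrite -[a *: x]addr0 ipL ip0l addr0. Qed.
Lemma ipNl x z : ip (- x) z = - ip x z.
Proof. by rewrite -scaleN1r ipZl mulN1r. Qed.
Lemma ipBl x y z : ip (x - y) z = ip x z - ip y z.
Proof. by rewrite ipDl ipNl. Qed.
Lemma ipDr x y z : ip z (x + y) = ip z x + ip z y.
Proof. by rewrite ipC ipDl conjD (ipC x z) (ipC y z). Qed.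
Lemma ipZr a x z : ip z (a *: x) = (a^*)%C * ip z x.
Proof. by rewrite ipC ipZl conjM (ipC x z). Qed.
Lemma ipNr x z : ip z (- x) = - ip z x.
Proof. by rewrite ipC ipNl conjN (ipC x z). Qed.
Lemma ipBr x y z : ip z (x - y) = ip z x - ip z y.
Proof. by rewrite ipDr ipNr. Qed.
Lemma ipZr_real (k : R) x z : ip z ((k%:C)%C *: x) = (k%:C)%C * ip z x.
Proof. by rewrite ipZr conj_real. Qed.

Lemma ip_self_conj x : ((ip x x)^*)%C = ip x x.
Proof. by symmetry; apply: ipC. Qed.

Definition nrm x := Rc (ip x x).

Lemma ip_self x : ip x x = ((nrm x)%:C)%C.
Proof. exact: real_of_ge0 (ipP x). Qed.

Lemma nrm_ge0 x : 0 <= nrm x.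
Proof. by have := ipP x; rewrite ip_self lecR. Qed.

Lemma nrm_eq0 x : nrm x = 0 -> x = 0.
Proof. by move=> h; apply: ipDef; rewrite ip_self h. Qed.

Lemma nrmD x y : nrm (x + y) = nrm x + nrm y + 2 * Rc (ip x y).
Proof.
rewrite /nrm ipDl !ipDr (ipC x y) !ReD Re_conj; ring.
Qed.

Lemma nrmZ a x : nrm (a *: x) = sqc a * nrm x.
Proof.
rewrite /nrm ipZl ipZr mulrA [a * _]mulrC conjM_sqc ip_self.
by rewrite ReM_real.
Qed.

Lemma nrmN x : nrm (- x) = nrm x.
Proof. by rewrite /nrm ipNl ipNr opprK. Qed.

Lemma nrmB x y : nrm (x - y) = nrm x + nrm y - 2 * Rc (ip x y).
Proof. by rewrite nrmD nrmN ipNr ReN; ring. Qed.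

Lemma nrmD_le x y : nrm (x + y) <= 2 * (nrm x + nrm y).
Proof.
have := nrmB x y; have := nrmD x y; have := nrm_ge0 (x - y); lra.
Qed.

Lemma nrm_sub_sym x y : nrm (x - y) = nrm (y - x).
Proof. by rewrite -nrmN opprB. Qed.

Lemma CS_Re x y : Rc (ip x y) ^+ 2 <= nrm x * nrm y.
Proof.
set r := Rc (ip x y).
have key : forall t : R, 0 <= nrm x + 2 * t * r + t ^+ 2 * nrm y.
  move=> t; have := nrm_ge0 (x + (t%:C)%C *: y).
  rewrite nrmD nrmZ ipZr_real ReM_real /sqc /= expr0n /= addr0 -/r.
  lra.
have hx := nrm_ge0 x; have hy := nrm_ge0 y.
have [hy0|hyp] := eqVneq (nrm y) 0.
  rewrite hy0 mulr0.
  have [r0|rn0] := eqVneq r 0; first by rewrite r0 expr0n.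
  have := key (- (nrm x + 1) / (2 * r)).
  rewrite hy0 mulr0 addr0.
  have -> : 2 * (- (nrm x + 1) / (2 * r)) * r = - (nrm x + 1).
    by field; exact: rn0.
  lra.
have yp : 0 < nrm y by rewrite lt_neqAle eq_sym hyp hy.
have := key (- r / nrm y).
have e : - r / nrm y * nrm y = - r by field.
move=> h.
have h2 : 0 <= nrm x * nrm y + 2 * (- r) * r + (- r) * (- r).
  have := mulr_ge0 (ltW yp) h.
  have -> : nrm y * (nrm x + 2 * (- r / nrm y) * r + (- r / nrm y) ^+ 2 * nrm y)
     = nrm x * nrm y + 2 * (- r / nrm y * nrm y) * r + (- r / nrm y * nrm y) * (- r / nrm y * nrm y).
    by field.
  by rewrite e.
nra.
Qed.

Lemma CS x y : sqc (ip x y) <= nrm x * nrm y.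
Proof.
set w := ip x y.
have h := CS_Re x (w *: y).
rewrite ipZr -/w conjM_sqc Re_real nrmZ in h.
have s0 := sqc_ge0 w; have hx := nrm_ge0 x; have hy := nrm_ge0 y.
have [s00|sp] := eqVneq (sqc w) 0; first by rewrite s00 mulr_ge0.
have spp : 0 < sqc w by rewrite lt_neqAle eq_sym sp s0.
nra.
Qed.

Definition cvgN (u : nat -> W) x :=
  forall e : R, 0 < e -> exists N, forall n, (N <= n)%N -> nrm (u n - x) < e.
Definition cauchyN (u : nat -> W) :=
  forall e : R, 0 < e -> exists N, forall n m, (N <= n)%N -> (N <= m)%N ->
    nrm (u n - u m) < e.

Lemma cvgE u x : cvg_seq ip u x <-> cvgN u x.
Proof.
split=> h e /h [N hN]; exists N => n /hN.
  by rewrite ip_self ltcR.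
by rewrite ip_self ltcR.
Qed.

Lemma complete u : cauchyN u -> exists x, cvgN u x.
Proof.
move=> h; have hc : forall u, cauchy_seq ip u -> exists x, cvg_seq ip u x.
  by move: HH; rewrite /is_hilbert; case.
have [x hx] : exists x, cvg_seq ip u x.
  apply: hc => e /h [N hN]; exists N => n m h1 h2.
  by rewrite ip_self ltcR; apply: hN.
by exists x; apply/cvgE.
Qed.

Lemma cvgN_cst x : cvgN (fun _ => x) x.
Proof.
by move=> e he; exists 0%N => n _; rewrite subrr /nrm ip0l.
Qed.

Lemma cvgND u v x y : cvgN u x -> cvgN v y ->
  cvgN (fun n => u n + v n) (x + y).
Proof.
move=> h1 h2 e he.
have e4 : 0 < e / 4 by rewrite divr_gt0.
have [N1 hN1] := h1 _ e4; have [N2 hN2] := h2 _ e4.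
exists (maxn N1 N2) => n hn.
have a1 := hN1 n (leq_trans (leq_maxl _ _) hn).
have a2 := hN2 n (leq_trans (leq_maxr _ _) hn).
have := nrmD_le (u n - x) (v n - y).
have -> : u n - x + (v n - y) = u n + v n - (x + y) by rewrite opprD addrACA.
lra.
Qed.

Lemma cvgNZ a u x : cvgN u x -> cvgN (fun n => a *: u n) (a *: x).
Proof.
move=> h e he.
have s0 := sqc_ge0 a.
have e1 : 0 < e / (sqc a + 1) by rewrite divr_gt0 // ltr_wpDl.
have [N hN] := h _ e1; exists N => n /hN hn.
rewrite -scalerBr nrmZ.
have hs : 0 < sqc a + 1 by rewrite ltr_wpDl.
have : sqc a * nrm (u n - x) <= sqc a * (e / (sqc a + 1)).
  by rewrite ler_wpM2l // ltW.
have : sqc a * (e / (sqc a + 1)) < e.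
  rewrite mulrA ltr_pdivrMr // mulrDr mulr1; lra.
lra.
Qed.

Lemma cvgNN u x : cvgN u x -> cvgN (fun n => - u n) (- x).
Proof.
move=> h; have := cvgNZ (-1) h.
by move=> h2 e /h2 [N hN]; exists N => n /hN; rewrite !scaleN1r.
Qed.

Lemma cvgNB u v x y : cvgN u x -> cvgN v y ->
  cvgN (fun n => u n - v n) (x - y).
Proof. by move=> h1 h2; apply: cvgND h1 (cvgNN h2). Qed.

Lemma cvgN_ext u v x : (forall n, u n = v n) -> cvgN u x -> cvgN v x.
Proof. by move=> e h ee /h [N hN]; exists N => n /hN; rewrite e. Qed.

Lemma ip_lim_l u x y : cvgN u x -> scvg (fun n => ip (u n) y) (ip x y).
Proof.
move=> h e he.
have hy := nrm_ge0 y.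
have e1 : 0 < e / (nrm y + 1) by rewrite divr_gt0 // ltr_wpDl.
have [N hN] := h _ e1; exists N => n /hN hn.
rewrite -ipBl.
have := CS (u n - x) y.
have hs : 0 < nrm y + 1 by rewrite ltr_wpDl.
have : nrm (u n - x) * nrm y <= e / (nrm y + 1) * nrm y.
  by rewrite ler_wpM2r // ltW.
have : e / (nrm y + 1) * nrm y < e.
  rewrite mulrAC ltr_pdivrMr // mulrDr mulr1; lra.
lra.
Qed.

Lemma ip_lim_r u x y : cvgN u x -> scvg (fun n => ip y (u n)) (ip y x).
Proof.
move=> /ip_lim_l h e /(h y) [N hN]; exists N => n /hN.
by rewrite (ipC (u n)) (ipC x) -conjB sqc_conj.
Qed.

Lemma ip_lim_self u x : cvgN u x -> scvg (fun n => ip (u n) (u n)) (ip x x).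
Proof.
move=> h e he.
have hx := nrm_ge0 x.
set e1 := Num.min 1 (e / (10 * (nrm x + 1))).
have he1 : 0 < e1.
  by rewrite lt_min ltr01 /= divr_gt0 // mulr_gt0 // ltr_wpDl.
have [N hN] := h _ he1; exists N => n /hN hn.
set d := u n - x.
have -> : ip (u n) (u n) - ip x x = ip d d + ip d x + ip x d.
  have -> : u n = d + x by rewrite subrK.
  rewrite !ipDl !ipDr; ring.
have c1 := sqcB_le (ip d d + ip d x) (ip x d).
have c2 := sqcB_le (ip d d) (ip d x).
have c3 : sqc (ip d d) <= nrm d * nrm d := CS d d.
have c4 : sqc (ip d x) <= nrm d * nrm x := CS d x.
have c5 : sqc (ip x d) <= nrm x * nrm d := CS x d.
have hd := nrm_ge0 d.
have hd1 : nrm d < 1 by apply: lt_le_trans hn _; rewrite ge_min lexx.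
have hd2 : nrm d < e / (10 * (nrm x + 1)) by apply: lt_le_trans hn _; rewrite ge_min lexx orbT.
have hd3 : nrm d * (10 * (nrm x + 1)) < e.
  by rewrite -ltr_pdivlMr // mulr_gt0 // ltr_wpDl.
nra.
Qed.

End Hil.
Section Lim.
Variable R : realType.
Local Notation C := R[i].
Local Notation Rc := complex.Re.

Lemma archi_inv (e : R) : 0 < e -> exists N, forall n, (N <= n)%N -> (n.+1%:R)^-1 < e.
Proof.
move=> he; exists (Num.Def.archi_bound (e^-1)) => n hn.
have hie : 0 < e^-1 by rewrite invr_gt0.
have h1 := archi_boundP (ltW hie).
have h2 : ((Num.Def.archi_bound e^-1)%:R : R) <= n%:R by rewrite ler_nat.
have h3 : (n%:R : R) < n.+1%:R by rewrite ltr_nat.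
have h4 : e^-1 < n.+1%:R by apply: lt_le_trans h1 (le_trans h2 (ltW h3)).
have hp : (0 : R) < n.+1%:R by rewrite ltr0Sn.
have h5 : e * e^-1 < e * n.+1%:R by rewrite ltr_pM2l.
rewrite mulfV ?gt_eqF // in h5.
by rewrite -[_^-1]mul1r ltr_pdivrMr // mulrC.
Qed.

Lemma scvg_Re_ge (z : nat -> C) (l : C) (d : R) : scvg z l -> (forall n, d <= Rc (z n)) -> d <= Rc l.
Proof.
move=> h hd; rewrite leNgt; apply/negP => hl.
have dp : 0 < (d - Rc l) ^+ 2 by rewrite exprn_gt0 // subr_gt0.
have [N hN] := h _ dp.
have a := hN N (leqnn _).
have b := Re_sq_le (z N - l).
rewrite ReB in b.
have c := hd N.
nra.
Qed.

Lemma scvg_Re_le (z : nat -> C) (l : C) (d : R) : scvg z l ->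
  (forall n, Rc (z n) <= d + (n.+1%:R)^-1) -> Rc l <= d.
Proof.
move=> h hd; rewrite leNgt; apply/negP => hl.
have dp : 0 < (Rc l - d) ^+ 2 / 4 by rewrite divr_gt0 // exprn_gt0 // subr_gt0.
have [N1 hN1] := h _ dp.
have dp2 : 0 < (Rc l - d) / 2 by rewrite divr_gt0 // subr_gt0.
have [N2 hN2] := archi_inv dp2.
set n := maxn N1 N2.
have a := hN1 n (leq_maxl _ _).
have a2 := hN2 n (leq_maxr _ _).
have b := Re_sq_le (z n - l).
rewrite ReB in b.
have c := hd n.
have c2 : Rc (z n) < d + (Rc l - d) / 2 by apply: le_lt_trans c _; rewrite ltrD2l.
have hx : Rc (z n) - Rc l < - ((Rc l - d) / 2) by lra.
have : 0 < (- (Rc (z n) - Rc l) - (Rc l - d) / 2) * (- (Rc (z n) - Rc l) + (Rc l - d) / 2).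
  by apply: mulr_gt0; lra.
have : (Rc l - d) ^+ 2 / 4 = ((Rc l - d) / 2) ^+ 2 by field.
nra.
Qed.
End Lim.

Section Proj.
Variable R : realType.
Local Notation C := R[i].
Local Notation Rc := complex.Re.
Variables (W : lmodType C) (ip : W -> W -> C).
Hypothesis HH : is_hilbert ip.
Local Notation nrm := (nrm ip).

Lemma paral x y : nrm (x + y) + nrm (x - y) = 2 * nrm x + 2 * nrm y.
Proof. rewrite (nrmD HH) (nrmB HH); ring. Qed.

Lemma sqc2 : sqc (2 : C) = 4.
Proof. by rewrite /sqc /=; ring. Qed.

Lemma projection (M : set W) : M 0 ->
  (forall a x y, M x -> M y -> M (a *: x + y)) ->
  forall z, exists (s : nat -> W) m, (forall n, M (s n)) /\ cvgN ip s m /\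
    forall a, M a -> ip (z - m) a = 0.
Proof.
move=> M0 Ml z.
have MZ : forall a x, M x -> M (a *: x) by move=> a x hx; rewrite -[_ *: x]addr0; apply: Ml.
have MD : forall x y, M x -> M y -> M (x + y) by move=> x y hx hy; rewrite -[x]scale1r; apply: Ml.
set E := [set nrm (z - a) | a in M].
have hinf : has_inf E.
  split; first by exists (nrm (z - 0)), 0.
  by exists 0 => _ [a _ <-]; apply: nrm_ge0.
set d := inf E.
have dlb : forall a, M a -> d <= nrm (z - a).
  by move=> a ha; apply: (ge_inf hinf.2); exists a.
have hs : forall n : nat, {a | M a /\ nrm (z - a) < d + (n.+1%:R)^-1}.
  move=> n; apply: cid.
  have hin : 0 < (n.+1%:R : R)^-1 by rewrite invr_gt0 ltr0Sn.
  have [_ [a ha <-] hlt] := inf_adherent hin hinf.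
  by exists a.
set s := fun n => proj1_sig (hs n).
have sM : forall n, M (s n) by move=> n; case: (proj2_sig (hs n)).
have sl : forall n, nrm (z - s n) < d + (n.+1%:R)^-1.
  by move=> n; case: (proj2_sig (hs n)).
have two0 : (2 : C) != 0 by rewrite pnatr_eq0.
have cau : cauchyN ip s.
  move=> e he.
  have e4 : 0 < e / 4 by rewrite divr_gt0.
  have [N hN] := archi_inv e4.
  exists N => n m hn hm.
  have := paral (z - s n) (z - s m).
  have -> : z - s n - (z - s m) = s m - s n.
    by rewrite opprB addrC addrA subrK.
  have -> : z - s n + (z - s m) = 2 *: (z - (2^-1 *: (s n + s m))).
    rewrite scalerBr scalerA mulfV // scale1r scaler_nat mulr2n.
    by rewrite opprD !addrA; congr (_ - _); rewrite addrAC.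
  rewrite (nrmZ HH) sqc2.
  have hmid := dlb _ (MZ (2^-1) _ (MD _ _ (sM n) (sM m))).
  have := sl n; have := sl m; have := hN n hn; have := hN m hm.
  rewrite (nrm_sub_sym HH (s n)).
  move: hmid.
  set i1 := (n.+1%:R : R)^-1; set i2 := (m.+1%:R : R)^-1.
  set A := nrm (z - s n); set B := nrm (z - s m); set X := nrm (s m - s n).
  set Mi := nrm (z - _ *: (s n + s m)).
  clearbody i1 i2 A B X Mi.
  lra.
have [m hm] := complete HH cau.
exists s, m; split => //; split => // a ha.
set r := z - m.
have zs : cvgN ip (fun n => z - s n) r := cvgNB HH (cvgN_cst HH z) hm.
have A : nrm r <= d.
  apply: (scvg_Re_le (ip_lim_self HH zs)) => n.
  by rewrite -/(nrm (z - s n)); apply: ltW; apply: sl.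
have B : forall t : C, d <= nrm (r - t *: a).
  move=> t.
  have zs2 : cvgN ip (fun n => z - (t *: a + s n)) (r - t *: a).
    apply: cvgN_ext (cvgNB HH zs (cvgN_cst HH (t *: a))) => n.
    by rewrite opprD addrA addrAC.
  apply: (scvg_Re_ge (ip_lim_self HH zs2)) => n.
  by rewrite -/(nrm _); apply: dlb; apply: Ml.
set w := ip r a.
set k := (nrm a + 1)^-1.
have ha0 := nrm_ge0 HH a.
have kp : 0 < k by rewrite invr_gt0 ltr_wpDl.
have ka : k * nrm a < 1.
  by rewrite /k mulrC ltr_pdivrMr ?ltr_wpDl // mul1r ltrDl.
have := B ((k%:C)%C * w).
rewrite (nrmB HH) (nrmZ HH) (ipZr HH) -/w Re_conj_kw sqc_kw => hh.
have s0 := sqc_ge0 w.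
have hw : sqc w = 0.
  apply/eqP; rewrite eq_le s0 andbT.
  have h1 : 0 <= k ^+ 2 * sqc w * nrm a - 2 * (k * sqc w).
    move: A hh; set X := nrm r; set Y := nrm a; clearbody X Y; lra.
  have h2 : k ^+ 2 * sqc w * nrm a - 2 * (k * sqc w) = (k * sqc w) * (k * nrm a - 2) by ring.
  rewrite h2 in h1.
  rewrite leNgt; apply/negP => sp.
  have : 0 < k * sqc w by apply: mulr_gt0.
  move: h1 ka; set P := k * sqc w; set Q := k * nrm a; clearbody P Q => h1 hQ hP.
  nra.
exact: sqc_eq0.
Qed.
End Proj.
Section Prod.
Variable R : realType.
Local Notation C := R[i].
Local Notation Rc := complex.Re.
Variables (A B : lmodType C) (ipA : A -> A -> C) (ipB : B -> B -> C).
Hypotheses (HA : is_hilbert ipA) (HB : is_hilbert ipB).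

Definition ipPr (p q : A * B) : C := ipA p.1 q.1 + ipB p.2 q.2.

Lemma ipP_self p : ipPr p p = (((nrm ipA p.1 + nrm ipB p.2)%:C)%C).
Proof. by rewrite /ipPr (ip_self HA) (ip_self HB) -rmorphD. Qed.

Lemma hilbertP : is_hilbert ipPr.
Proof.
split.
- move=> a x y z; rewrite /ipPr /= (ipL HA) (ipL HB); ring.
- by move=> x y; rewrite /ipPr conjD (ipC HA x.1 y.1) (ipC HB x.2 y.2).
- by move=> x; rewrite ipP_self lecR addr_ge0 // nrm_ge0.
- move=> [x1 x2]; rewrite ipP_self /= => h.
  have h0 : nrm ipA x1 + nrm ipB x2 = 0 by case: h.
  have g1 := nrm_ge0 HA x1; have g2 := nrm_ge0 HB x2.
  have e1 : nrm ipA x1 = 0 by lra.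
  have e2 : nrm ipB x2 = 0 by lra.
  by rewrite (nrm_eq0 HA e1) (nrm_eq0 HB e2).
- move=> u hu.
  have hu' : forall e : R, 0 < e -> exists N, forall n m, (N <= n)%N -> (N <= m)%N ->
      nrm ipA (u n - u m).1 + nrm ipB (u n - u m).2 < e.
    move=> e /hu [N hN]; exists N => n m h1 h2; have := hN n m h1 h2.
    by rewrite ipP_self ltcR.
  have c1 : cauchyN ipA (fun n => (u n).1).
    move=> e /hu' [N hN]; exists N => n m h1 h2; have := hN n m h1 h2.
    have := nrm_ge0 HB (u n - u m).2; rewrite /=; lra.
  have c2 : cauchyN ipB (fun n => (u n).2).
    move=> e /hu' [N hN]; exists N => n m h1 h2; have := hN n m h1 h2.
    have := nrm_ge0 HA (u n - u m).1; rewrite /=; lra.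
  have [x1 h1] := complete HA c1; have [x2 h2] := complete HB c2.
  exists (x1, x2) => e he.
  have e2 : 0 < e / 2 by rewrite divr_gt0.
  have [N1 hN1] := h1 _ e2; have [N2 hN2] := h2 _ e2.
  exists (maxn N1 N2) => n hn.
  have a1 := hN1 n (leq_trans (leq_maxl _ _) hn).
  have a2 := hN2 n (leq_trans (leq_maxr _ _) hn).
  rewrite ipP_self ltcR /=; lra.
Qed.

Lemma cvgP u x : cvgN ipPr u x <-> (cvgN ipA (fun n => (u n).1) x.1 /\ cvgN ipB (fun n => (u n).2) x.2).
Proof.
have nP : forall p, nrm ipPr p = nrm ipA p.1 + nrm ipB p.2.
  by move=> p; rewrite /nrm ipP_self.
split.
- move=> h; split=> e /h [N hN]; exists N => n /hN; rewrite nP /=.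
    by have := nrm_ge0 HB ((u n).2 - x.2); lra.
  by have := nrm_ge0 HA ((u n).1 - x.1); lra.
- case=> h1 h2 e he.
  have e2 : 0 < e / 2 by rewrite divr_gt0.
  have [N1 hN1] := h1 _ e2; have [N2 hN2] := h2 _ e2.
  exists (maxn N1 N2) => n hn.
  have a1 := hN1 n (leq_trans (leq_maxl _ _) hn).
  have a2 := hN2 n (leq_trans (leq_maxr _ _) hn).
  rewrite nP /=; lra.
Qed.
End Prod.
Section Adj.
Variable R : realType.
Local Notation C := R[i].
Variables (A B : lmodType C) (ipA : A -> A -> C) (ipB : B -> B -> C).
Hypotheses (HA : is_hilbert ipA) (HB : is_hilbert ipB).

Lemma cvg_cauchy (W : lmodType C) (ip : W -> W -> C) (HW : is_hilbert ip) u x :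
  cvgN ip u x -> cauchyN ip u.
Proof.
move=> h e he.
have e4 : 0 < e / 4 by rewrite divr_gt0.
have [N hN] := h _ e4; exists N => n m h1 h2.
have a1 := hN n h1; have a2 := hN m h2.
have := nrmD_le HW (u n - x) (x - u m).
rewrite addrA subrK (nrm_sub_sym HW x).
lra.
Qed.

Lemma linrelB (T : set (A * B)) p q : is_linrel T -> T p -> T q -> T (p.1 - q.1, p.2 - q.2).
Proof.
move=> [h0 hl] hp hq.
have hq' := hl (-1) q (0, 0) hq h0; rewrite /= !addr0 !scaleN1r in hq'.
by have := hl 1 p _ hp hq'; rewrite /= !scale1r.
Qed.

Lemma adj_lin (T : set (A * B)) : is_linrel (adjr ipA ipB T).
Proof.
split.
- by move=> q _ /=; rewrite (ip0r HB) (ip0r HA).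
- move=> a p q hp hq r hr /=.
  by rewrite (ipDr HB) (ipZr HB) (ipDr HA) (ipZr HA) hp // hq.
Qed.

Lemma adj_closed (T : set (B * A)) (u : nat -> A * B) p :
  (forall n, adjr ipB ipA T (u n)) ->
  cvgN ipA (fun n => (u n).1) p.1 -> cvgN ipB (fun n => (u n).2) p.2 ->
  adjr ipB ipA T p.
Proof.
move=> hu h1 h2 q hq.
apply: (scvg_eq _ (ip_lim_r HA q.2 h1) (ip_lim_r HB q.1 h2)) => n.
exact: hu.
Qed.

Lemma sub_adj2 (T : set (A * B)) : T `<=` adjr ipB ipA (adjr ipA ipB T).
Proof.
move=> q hq p hp /=.
by rewrite (ipC HA) (ipC HB) hp.
Qed.

Lemma adj_anti (T1 T2 : set (A * B)) : T1 `<=` T2 ->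
  adjr ipA ipB T2 `<=` adjr ipA ipB T1.
Proof. by move=> s p hp q /s; apply: hp. Qed.
End Adj.
Section Main.
Variable R : realType.
Local Notation C := R[i].
Local Notation Rc := complex.Re.
Variables (V : lmodType C) (ip : V -> V -> C) (S : set (V * V)) (c : R)
  (K : lmodType C) (ipK : K -> K -> C) (Q : V -> K).
Hypotheses (HV : is_hilbert ip) (HK : is_hilbert ipK) (SL : is_linrel S)
  (Hr : repr_map ip ipK S c Q).

Local Notation cC := ((c%:C)%C : C).
Local Notation Sadj := (adjr ip ip S).
Local Notation J := (companion S c Q).
Local Notation Js := (adjr ipK ip J).
Local Notation Jss := (adjr ip ipK Js).
Local Notation Sc := (shiftr S cC).

Lemma S0 : S (0, 0). Proof. by case: SL. Qed.
Lemma SLc a p q : S p -> S q -> S (a *: p.1 + q.1, a *: p.2 + q.2).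
Proof. by case: SL => _; apply. Qed.
Lemma SB p q : S p -> S q -> S (p.1 - q.1, p.2 - q.2).
Proof.
move=> hp hq.
have hq' : S (-1 *: q.1 + 0, -1 *: q.2 + 0) by apply: SLc hq S0.
have := SLc 1 hp hq'; rewrite /= !addr0 !scaleN1r !scale1r.
by [].
Qed.

Lemma domS p : S p -> domr S p.1.
Proof. by move=> h; exists p.2; case: p h. Qed.

Lemma QL a x y : domr S x -> domr S y -> Q (a *: x + y) = a *: Q x + Q y.
Proof. by case: Hr => h _; apply: h. Qed.
Lemma Qrep p y : S p -> domr S y -> ip p.2 y = cC * ip p.1 y + ipK (Q p.1) (Q y).
Proof. by case: Hr => _ h; apply: h. Qed.

Lemma Q0 : Q 0 = 0.
Proof.
have d0 : domr S 0 by exists 0; apply: S0.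
have := QL 1 d0 d0; rewrite scaler0 addr0 scale1r => h.
by apply: (addrI (Q 0)); rewrite addr0 -h.
Qed.

Lemma QB p q : S p -> S q -> Q (p.1 - q.1) = Q p.1 - Q q.1.
Proof.
move=> hp hq.
have dq := domS hq; have dp := domS hp.
have d0 : domr S 0 by exists 0; apply: S0.
have hN : Q (- q.1) = - Q q.1.
  by have := QL (-1) dq d0; rewrite addr0 Q0 addr0 !scaleN1r.
have dnq : domr S (- q.1) by exists (- q.2); have := SB S0 hq; rewrite !sub0r.
by have := QL 1 dp dnq; rewrite !scale1r hN.
Qed.

Lemma rep_shift p y : S p -> domr S y -> ip (p.2 - cC *: p.1) y = ipK (Q p.1) (Q y).
Proof. by move=> hp hy; rewrite (ipBl HV) (ipZl HV) Qrep // addrC addKr. Qed.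

Lemma S_sym p q : S p -> S q -> ip q.2 p.1 = ip q.1 p.2.
Proof.
move=> hp hq.
rewrite Qrep //; last by apply: domS.
rewrite (ipC HV p.1 q.1) (ipC HK (Q p.1) (Q q.1)) (ipC HV p.2 q.1).
rewrite Qrep //; last by apply: domS.
exact: conj_lin.
Qed.

Lemma S_Sadj : S `<=` Sadj.
Proof. by move=> p hp q hq; apply: S_sym. Qed.

Lemma adj_shift q p : S q -> Sadj p ->
  ip (q.2 - cC *: q.1) p.1 = ip q.1 (p.2 - cC *: p.1).
Proof.
move=> hq hp.
by rewrite (ipBl HV) (ipBr HV) (ipZl HV) (ipZr HV) conj_real hp.
Qed.

Lemma F1 p : S p -> Js (p.1, Q p.1).
Proof.
move=> hp [k v] [q [hq /= [-> ->]]] /=.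
by rewrite rep_shift //; apply: domS.
Qed.

Lemma F2 n : Sadj (n, cC *: n) -> Js (n, 0).
Proof.
move=> hn [k v] [q [hq /= [-> ->]]] /=.
rewrite (ip0r HK) (ipBl HV) (ipZl HV) hn //= (ipZr_real HV).
by rewrite subrr.
Qed.

Lemma F3 h k v : Js (h, k) -> Jss (k, v) -> Sadj (h, v + cC *: h).
Proof.
move=> hk kv q hq /=.
have j : J (Q q.1, q.2 - cC *: q.1) by exists q.
have e1 := hk _ j; rewrite /= in e1.
have e2 := kv _ (F1 hq); rewrite /= in e2.
have : ip (q.2 - cC *: q.1) h = ip q.1 v by rewrite e1 e2.
rewrite (ipBl HV) (ipZl HV) (ipDr HV) (ipZr HV) conj_real => e.
by rewrite -e subrK.
Qed.

Lemma formid p q : S p -> S q ->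
  ip (p.1 - q.1) ((p.2 - cC *: p.1) - (q.2 - cC *: q.1)) =
  ipK (Q p.1 - Q q.1) (Q p.1 - Q q.1).
Proof.
move=> hp hq.
have hd := SB hp hq.
have -> : p.2 - cC *: p.1 - (q.2 - cC *: q.1) = (p.1 - q.1, p.2 - q.2).2 - cC *: (p.1 - q.1, p.2 - q.2).1.
  by rewrite /= scalerBr subrACA'.
rewrite (ipC HV) rep_shift //=; last by apply: (domS hd).
by rewrite (QB hp hq) ip_self_conj.
Qed.
Local Notation Dt := (dom_formcl ip (invr Sc)).

Lemma norm_ipK_self (y : K) : `|ipK y y| = ((nrm ipK y)%:C)%C.
Proof. by rewrite ger0_norm ?(ipP HK) // (ip_self HK). Qed.

Lemma dom_char x : Dt x <-> exists ph : nat -> V * V, (forall n, S (ph n)) /\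
  cvgN ip (fun n => (ph n).2 - cC *: (ph n).1) x /\ cauchyN ipK (fun n => Q (ph n).1).
Proof.
split.
- case=> u [hu [hc hcau]].
  have hq : forall n, {q | S q /\ ((u n).2, (u n).1) = (q.1, q.2 - cC *: q.1)}.
    by move=> n; apply: cid; apply: hu.
  set ph := fun n => proj1_sig (hq n).
  have phS : forall n, S (ph n) by move=> n; rewrite /ph; case: (hq n) => q /= [].
  have phE : forall n, (u n).2 = (ph n).1 /\ (u n).1 = (ph n).2 - cC *: (ph n).1.
    by move=> n; rewrite /ph; case: (hq n) => q /= [_ [e1 e2]].
  exists ph; split => //; split.
    have hc' := proj1 (cvgE HV _ _) hc.
    apply: (cvgN_ext _ hc') => n.
    by case: (phE n).
  move=> e he; have [N hN] := hcau e he; exists N => n m h1 h2.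
  have := hN n m h1 h2.
  case: (phE n) => -> ->; case: (phE m) => -> ->.
  by rewrite (formid (phS n) (phS m)) norm_ipK_self ltcR.
- case=> ph [phS [hc hcau]].
  exists (fun n => ((ph n).2 - cC *: (ph n).1, (ph n).1)); split.
    by move=> n; exists (ph n).
  split; first by apply/(cvgE HV).
  move=> e he; have [N hN] := hcau e he; exists N => n m h1 h2 /=.
  by rewrite (formid (phS n) (phS m)) norm_ipK_self ltcR; apply: hN.
Qed.

Lemma hatN_iff (T : set (V * V)) p : hatN cC T p <-> T (p.1, cC *: p.1) /\ p.2 = cC *: p.1.
Proof.
split.
- case=> [[q [hq [e1 e2]]] ->]; split=> //.
  have -> : (p.1, cC *: p.1) = q.
    case: q hq e1 e2 => a b /= hq -> e2.
    by move/eqP: e2; rewrite eq_sym subr_eq0 => /eqP ->.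
  exact: hq.
- case=> h e; split=> //; exists (p.1, cC *: p.1); split=> //=.
  by rewrite subrr.
Qed.

Lemma F2' n : Js (n, 0) -> Sadj (n, cC *: n).
Proof.
move=> hn q hq /=.
have j : J (Q q.1, q.2 - cC *: q.1) by exists q.
have := hn _ j; rewrite /= (ip0r HK) (ipBl HV) (ipZl HV) => /eqP.
by rewrite subr_eq0 (ipZr_real HV) => /eqP.
Qed.

Lemma Js_lin : is_linrel Js. Proof. exact: adj_lin. Qed.

Lemma JsB p q : Js p -> Js q -> Js (p.1 - q.1, p.2 - q.2).
Proof.
move=> hp hq; case: Js_lin => h0 hl.
have hq' := hl (-1) q (0, 0) hq h0; rewrite /= !addr0 !scaleN1r in hq'.
by have := hl 1 p _ hp hq'; rewrite /= !scale1r.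
Qed.

Lemma JsD p q : Js p -> Js q -> Js (p.1 + q.1, p.2 + q.2).
Proof.
move=> hp hq; case: Js_lin => h0 hl.
by have := hl 1 p _ hp hq; rewrite /= !scale1r.
Qed.

Lemma partb1 : kreink ip ipK S c Q = csum S (hatN cC Sadj).
Proof.
rewrite /kreink /=; apply/seteqP; split.
- move=> p [q [[g [hg [ph [hph [eg eq2]]]]] ->]].
  rewrite /= in eg eq2.
  have js := JsB hg (F1 hph); rewrite /= eg subrr in js.
  have sa := F2' js.
  exists ph, (q.1 - ph.1, cC *: (q.1 - ph.1)); split=> //; split.
    by apply/hatN_iff.
  rewrite /= eq2; congr (_, _); first by rewrite addrC subrK.
  by rewrite scalerBr [_ *: q.1 - _]addrC addrA.
- move=> p [q1 [q2 [h1 [/hatN_iff [h2 e2] ->]]]].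
  exists (q1.1 + q2.1, q1.2 - cC *: q1.1); split.
    exists (Q q1.1); split.
      have := JsD (F1 h1) (F2 h2); rewrite /= addr0.
      by [].
    by exists q1.
  rewrite /= e2; congr (_, _).
  by rewrite scalerDr addrA subrK.
Qed.

Lemma partb2 (H : set (V * V)) : is_linrel H -> symmetricr ip H -> S `<=` H ->
  ranr (shiftr H cC) `<=` ranr Sc -> H `<=` kreink ip ipK S c Q.
Proof.
move=> HL Hs SH Hran p hp.
rewrite partb1.
have : ranr (shiftr H cC) (p.2 - cC *: p.1) by exists p.1, p.
move/Hran => [f [ph [hph [ef ex]]]].
rewrite /= in ef ex.
set n := p.1 - ph.1.
have e2 : p.2 - ph.2 = cC *: n.
  have -> : p.2 = ph.2 - cC *: ph.1 + cC *: p.1 by rewrite -ex subrK.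
  by rewrite /n scalerBr addrAC (addrAC ph.2) subrr add0r addrC.
have hn : H (n, cC *: n).
  have [h0 hl] := HL.
  have hph' := hl (-1) ph (0, 0) (SH _ hph) h0.
  rewrite /= !addr0 !scaleN1r in hph'.
  by have := hl 1 p _ hp hph'; rewrite /= !scale1r -e2.
have sa : Sadj (n, cC *: n).
  move=> q hq; exact: (Hs _ hn q (SH _ hq)).
exists ph, (n, cC *: n); split=> //; split; first by apply/hatN_iff.
rewrite /= -e2 /n [ph.1 + _]addrC [ph.2 + _]addrC !subrK.
by case: (p).
Qed.

Lemma J0 : J (0, 0).
Proof. exists (0, 0); split; first exact: S0. by rewrite /= Q0 scaler0 subrr. Qed.

Lemma Jlin a x y : J x -> J y -> J (a *: x + y).
Proof.
move=> [p [hp ->]] [q [hq ->]].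
exists (a *: p.1 + q.1, a *: p.2 + q.2); split; first exact: SLc.
rewrite /= (QL _ (domS hp) (domS hq)); congr (_, _).
have -> : (a *: (Q p.1, p.2 - cC *: p.1)).2 = a *: (p.2 - cC *: p.1) by [].
rewrite /= scalerBr scalerDr scalerA [a * _]mulrC -scalerA addrACA -opprD.
by [].
Qed.

Lemma J_sub_Jss : J `<=` Jss.
Proof. exact: sub_adj2. Qed.

Lemma Jss_Dt k v : Jss (k, v) -> Dt v.
Proof.
move=> hkv.
have HP := hilbertP HK HV.
have [s [m [sJ [scv horth]]]] := projection HP J0 (fun a x y => @Jlin a x y) (k, v).
have [s1 s2] := proj1 (cvgP HK HV s m) scv.
have mJ : Jss m.
  apply: (adj_closed HK HV _ s1 s2) => n.
  exact: J_sub_Jss.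
set r := (k, v) - m.
have rJ : Jss r.
  have [h0 hl] := adj_lin HV HK Js.
  have := hl (-1) m (k, v) mJ hkv; rewrite /= !scaleN1r => h.
  by rewrite [- _ + k]addrC [- _ + v]addrC in h.
have rJs : Js (- r.2, r.1).
  move=> q hq /=.
  have := horth q hq; rewrite /ipPr => /eqP; rewrite addr_eq0 => /eqP e.
  rewrite (ipNr HV) (ipC HK r.1 q.1) e (ipC HV r.2 q.2).
  by symmetry; apply: conjN.
have := rJ _ rJs; rewrite /= (ipNl HV) => e.
have n1 : nrm ipK r.1 = - nrm ip r.2.
  by rewrite /nrm e ReN.
have g1 := nrm_ge0 HK r.1; have g2 := nrm_ge0 HV r.2.
have r1 : r.1 = 0 by apply: (nrm_eq0 HK); lra.
have r2 : r.2 = 0 by apply: (nrm_eq0 HV); lra.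
have mk : m.1 = k by apply/eqP; rewrite eq_sym -subr_eq0; apply/eqP; exact: r1.
have mv : m.2 = v by apply/eqP; rewrite eq_sym -subr_eq0; apply/eqP; exact: r2.
have hq : forall n, {q | S q /\ s n = (Q q.1, q.2 - cC *: q.1)}.
  by move=> n; apply: cid; apply: sJ.
set ph := fun n => proj1_sig (hq n).
have phS : forall n, S (ph n) by move=> n; rewrite /ph; case: (hq n) => q /= [].
have phE : forall n, s n = (Q (ph n).1, (ph n).2 - cC *: (ph n).1).
  by move=> n; rewrite /ph; case: (hq n) => q /= [].
apply/dom_char; exists ph; split=> //; split.
  rewrite -mv; apply: (cvgN_ext _ s2) => n; by rewrite phE.
apply: (cvg_cauchy HK (x := m.1)).
by apply: (cvgN_ext _ s1) => n; rewrite phE.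
Qed.

Local Notation X := (compr Jss Js).
Local Notation SKc := (kreinK ip ipK S c Q).

Lemma SKcE : SKc = plusr cC X. Proof. by []. Qed.

Lemma partA1 : SKc = [set p | Sadj p /\ Dt (p.2 - cC *: p.1)].
Proof.
rewrite SKcE; apply/seteqP; split.
- move=> p [q [[g [hg hgq]] ->]] /=; split; first exact: F3 hg hgq.
  by rewrite addrK; apply: Jss_Dt hgq.
- move=> p [hp /dom_char [ph [phS [hcv hcau]]]].
  have [k hk] := complete HK hcau.
  set x := p.2 - cC *: p.1.
  have h1 : Js (p.1, k).
    move=> q [psi [hpsi ->]] /=.
    rewrite (adj_shift hpsi hp) -/x.
    apply: (scvg_eq _ (ip_lim_r HV psi.1 hcv) (ip_lim_r HK (Q psi.1) hk)) => n /=.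
    rewrite -(adj_shift hpsi (S_Sadj (phS n))).
    have j : J (Q psi.1, psi.2 - cC *: psi.1) by exists psi.
    by have := F1 (phS n) j.
  have h2 : Jss (k, x).
    move=> [a b] hab /=.
    apply: (scvg_eq _ (ip_lim_r HK b hk) (ip_lim_r HV a hcv)) => n /=.
    have j : J (Q (ph n).1, (ph n).2 - cC *: (ph n).1) by exists (ph n).
    have := hab _ j; rewrite /= => e.
    by rewrite (ipC HK (Q (ph n).1) b) -e (ipC HV ((ph n).2 - cC *: (ph n).1) a).
  exists (p.1, x); split; first by exists k.
  by rewrite /= /x subrK; case: (p).
Qed.

Lemma X_sym p q : X p -> X q -> ip q.2 p.1 = ip q.1 p.2.
Proof.
case: p => f w [g [hg hgw]]; case: q => f2 w2 [g2 [hg2 hgw2]] /=.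
have e1 := hgw2 _ hg; have e2 := hgw _ hg2; rewrite /= in e1 e2.
by rewrite (ipC HV f w2) -e1 -e2 (ipC HK g g2).
Qed.

Lemma SK_sym p q : SKc p -> SKc q -> ip q.2 p.1 = ip q.1 p.2.
Proof.
rewrite SKcE => -[p' [hp ->]] [q' [hq ->]] /=.
by rewrite (ipDl HV) (ipDr HV) (ipZl HV) (ipZr_real HV) (X_sym hp hq).
Qed.

Lemma partA2 (H : set (V * V)) : is_linrel H -> selfadjointr ip H -> S `<=` H ->
  ranr (shiftr H cC) `<=` Dt -> H = SKc.
Proof.
move=> HL Hsa SH Hran.
have HSK : H `<=` SKc.
  move=> p hp; rewrite partA1; split.
    have : adjr ip ip H p by rewrite -Hsa.
    by apply: adj_anti.
  by apply: Hran; exists p.1, p.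
apply/seteqP; split => // p hp.
rewrite Hsa => q hq.
exact: SK_sym hp (HSK _ hq).
Qed.

Local Notation Skc := (kreink ip ipK S c Q).

Lemma SadjB p q : Sadj p -> Sadj q -> Sadj (p.1 - q.1, p.2 - q.2).
Proof. by move=> hp hq; exact: (linrelB (adj_lin HV HV S) hp hq). Qed.
Lemma SadjD p q : Sadj p -> Sadj q -> Sadj (p.1 + q.1, p.2 + q.2).
Proof.
move=> hp hq; have [h0 hl] := adj_lin HV HV S.
by have := hl 1 p q hp hq; rewrite !scale1r.
Qed.

Lemma ranSc_Dt : ranr Sc `<=` Dt.
Proof.
move=> x [f [ph [hph [_ ->]]]].
apply/dom_char; exists (fun _ => ph); split=> //; split.
  exact: cvgN_cst.
by move=> e he; exists 0%N => n m _ _; rewrite subrr /nrm (ip0l HK).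
Qed.

Lemma Dt_cl : Dt `<=` closure_set ip (ranr Sc).
Proof.
move=> x /dom_char [ph [phS [hcv _]]].
exists (fun n => (ph n).2 - cC *: (ph n).1); split.
  by move=> n; exists (ph n).1, (ph n).
exact/(cvgE HV).
Qed.

Lemma Skc_sub : Skc `<=` SKc.
Proof.
rewrite partb1 partA1 => p [q1 [q2 [h1 [/hatN_iff [h2 e2] ->]]]] /=.
split.
  have := SadjD (S_Sadj h1) h2; rewrite -e2.
  by [].
apply: ranSc_Dt; exists q1.1, q1; split => //=.
rewrite e2 scalerDr; congr (_, _).
by rewrite opprD addrACA subrr addr0.
Qed.

Lemma X_range u : exists f w, X (f, w) /\ f + w = u.
Proof.
have HP := hilbertP HV HK.
have [h0 hl] := adj_lin HK HV J.
have [s [m [sJ [scv horth]]]] := projection HP h0 (fun a x y => @hl a x y) (u, 0).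
have [s1 s2] := proj1 (cvgP HV HK s m) scv.
have mJ : Js m by apply: (adj_closed HV HK _ s1 s2) => n; exact: sJ.
exists m.1, (u - m.1); split; last by rewrite addrC subrK.
exists m.2; split; first by case: (m) mJ.
move=> a ha /=.
have := horth a ha; rewrite /ipPr /= => /eqP; rewrite addr_eq0 => /eqP e.
by rewrite (ipC HV (u - m.1) a.1) e sub0r (ipNl HK) opprK (ipC HK m.2 a.2).
Qed.

Lemma X_sa : adjr ip ip X `<=` X.
Proof.
move=> [h y] hhy.
have [f [w [hfw efw]]] := X_range (h + y).
set d := h - f.
have hXs : adjr ip ip X (f, w) by move=> q hq; exact: X_sym hfw hq.
have hd : adjr ip ip X (d, - d).
  have := linrelB (adj_lin HV HV X) hhy hXs; rewrite /=.
  have -> : y - w = - d.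
    have ey : y = f + w - h by rewrite efw [h + y]addrC addrK.
    by rewrite ey addrAC addrK /d opprB.
  by [].
have [g [z [hgz egz]]] := X_range d.
have e1 := hd _ hgz; rewrite /= in e1.
have dd : ip d d = 0.
  rewrite -{1}egz (ipDl HV) e1 (ipNr HV) subrr.
  by [].
have d0 : d = 0 := ipDef HV dd.
have hf : h = f by apply/eqP; rewrite -subr_eq0 -/d d0.
have yw : y = w.
  by move/eqP: efw; rewrite hf eq_sym => /eqP /addrI ->.
by rewrite hf yw.
Qed.

Lemma SK_sa : adjr ip ip SKc `<=` SKc.
Proof.
move=> p hp; rewrite SKcE.
exists (p.1, p.2 - cC *: p.1); split; last by rewrite /= subrK; case: (p).
apply: X_sa => q hq /=.
have hq' : SKc (q.1, q.2 + cC *: q.1) by rewrite SKcE; exists q.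
have := hp _ hq'; rewrite /= (ipDl HV) (ipZl HV) (ipBr HV) (ipZr_real HV) => <-.
by rewrite addrK.
Qed.

Lemma partC2 : Skc = SKc <->
  ranr Sc = closure_set ip (ranr Sc) `&` ranr (shiftr Sadj cC).
Proof.
split.
- move=> eqk; apply/seteqP; split.
    move=> x hx; split; first by apply: Dt_cl; apply: ranSc_Dt.
    case: hx => f [q [hq [_ ->]]]; exists q.1, q; split=> //; exact: S_Sadj.
  move=> x [[xs [hxs hcv]] [f [p [hp [ef ex]]]]].
  rewrite /= in ef ex.
  have hpK : SKc p.
    apply: SK_sa => q; rewrite -eqk partb1 => -[q1 [q2 [h1 [/hatN_iff [h2 e2] ->]]]] /=.
    rewrite !(ipDl HV) (hp _ h1) e2 (ipZl HV).
    congr (_ + _).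
    have -> : p.2 = x + cC *: p.1 by rewrite ex subrK.
    rewrite (ipDr HV) (ipZr_real HV).
    suff -> : ip q2.1 x = 0 by rewrite add0r.
    have hcv' := proj1 (cvgE HV _ _) hcv.
    have hxn : forall n, {q | S q /\ xs n = q.2 - cC *: q.1}.
      move=> n; apply: cid; case: (hxs n) => g [q0 [hq0 [_ e]]]; by exists q0.
    apply: (scvg_eq _ (ip_lim_r HV q2.1 hcv') (scvg_cst 0)) => n.
    case: (hxn n) => q0 [hq0 ->].
    rewrite (ipC HV (q0.2 - cC *: q0.1) q2.1) (ipBl HV) (ipZl HV) (h2 _ hq0) /= (ipZr_real HV).
    by rewrite subrr conj0.
  move: hpK; rewrite -eqk partb1 => -[q1 [q2 [h1 [/hatN_iff [h2 e2] ep]]]].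
  exists q1.1, q1; split=> //=; congr (_, _).
  rewrite ex ep /= e2 scalerDr.
  by rewrite opprD addrACA subrr addr0.
- move=> eqr; apply/seteqP; split; first exact: Skc_sub.
  move=> p; rewrite partA1 => -[hp hx].
  have : ranr Sc (p.2 - cC *: p.1).
    rewrite eqr; split; first exact: Dt_cl.
    by exists p.1, p.
  case=> f [ph [hph [ef ex]]]; rewrite /= in ef ex.
  rewrite partb1.
  set n := p.1 - ph.1.
  have e2 : p.2 - ph.2 = cC *: n.
    have -> : p.2 = ph.2 - cC *: ph.1 + cC *: p.1 by rewrite -ex subrK.
    by rewrite /n scalerBr addrAC (addrAC ph.2) subrr add0r addrC.
  have sa : Sadj (n, cC *: n).
    by have := SadjB hp (S_Sadj hph); rewrite /= e2.
  exists ph, (n, cC *: n); split=> //; split; first by apply/hatN_iff.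
  rewrite /= -e2 /n [ph.1 + _]addrC [ph.2 + _]addrC !subrK.
  by case: (p).
Qed.

Lemma partC3 : closure_set ip (ranr Sc) = ranr Sc -> Skc = SKc.
Proof.
move=> h; apply/partC2; rewrite h; apply/seteqP; split.
  move=> x hx; split=> //; case: hx => f [q [hq [_ ->]]]; exists q.1, q; split=> //.
  exact: S_Sadj.
by move=> x [].
Qed.

Lemma coercive c2 p : lb_set ip S c2 -> S p ->
  (c2 - c) * nrm ip p.1 <= nrm ipK (Q p.1).
Proof.
move=> hl hp.
have := hl p hp; rewrite lecE => /andP[_ hre].
rewrite ReM_real -/(nrm ip p.1) in hre.
have e := rep_shift hp (domS hp).
have : nrm ipK (Q p.1) = Rc (ip p.2 p.1) - c * nrm ip p.1.
  by rewrite /nrm -e (ipBl HV) (ipZl HV) ReB ReM_real.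
move=> ->; rewrite mulrBl; lra.
Qed.

Lemma partC1 gamma : semibounded_lb ip S gamma -> c < gamma ->
  SKc = csum (closure_rel ip S) (hatN cC Sadj).
Proof.
move=> [_ [hub hsup]] hlt.
have [c2 [hc2 cc2]] : exists c2, lb_set ip S c2 /\ c < c2.
  case: (pselect (exists c2, lb_set ip S c2 /\ c < c2)) => // hn.
  have : gamma <= c.
    apply: hsup => c2 hc2; rewrite leNgt; apply/negP => hlt2.
    by apply: hn; exists c2.
  by rewrite leNgt hlt.
have dp : 0 < c2 - c by rewrite subr_gt0.
apply/seteqP; split.
- move=> p; rewrite partA1 => -[hp /dom_char [ph [phS [hcv hcau]]]].
  set x := p.2 - cC *: p.1 in hcv.
  have cau1 : cauchyN ip (fun n => (ph n).1).
    move=> e he.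
    have [N hN] := hcau (e * (c2 - c)) (mulr_gt0 he dp).
    exists N => n m h1 h2.
    have hd := SB (phS n) (phS m).
    have := coercive hc2 hd; rewrite /= (QB (phS n) (phS m)) => hc.
    have := hN n m h1 h2 => hq.
    have g := nrm_ge0 HV ((ph n).1 - (ph m).1).
    move: hc hq g; set a := nrm ip _; set b := nrm ipK _; clearbody a b => hc hq g.
    nra.
  have [phi hphi] := complete HV cau1.
  set phi2 := x + cC *: phi.
  have h2 : cvgN ip (fun n => (ph n).2) phi2.
    apply: (cvgN_ext _ (cvgND HV hcv (cvgNZ HV cC hphi))) => n.
    by rewrite subrK.
  have hcl : closure_rel ip S (phi, phi2).
    by exists ph; split=> //; split; apply/(cvgE HV).
  have hsa : Sadj (phi, phi2).
    apply: (adj_closed (p := (phi, phi2)) HV HV _ hphi h2) => n; exact: S_Sadj.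
  set n := p.1 - phi.
  have e2 : p.2 - phi2 = cC *: n.
    by rewrite /phi2 /x /n scalerBr opprD opprB addrA [p.2 + _]addrC subrK.
  have sa : Sadj (n, cC *: n) by have := SadjB hp hsa; rewrite /= e2.
  exists (phi, phi2), (n, cC *: n); split=> //; split; first by apply/hatN_iff.
  rewrite /= -e2 /n [phi + _]addrC [phi2 + _]addrC !subrK.
  by case: (p).
- move=> p [q1 [q2 [[u [hu [c1 c2']]] [/hatN_iff [h2 e2] ->]]]].
  have u1 := proj1 (cvgE HV _ _) c1; have u2 := proj1 (cvgE HV _ _) c2'.
  rewrite partA1; split.
    have hq1 : Sadj q1 by apply: (adj_closed HV HV _ u1 u2) => n; exact: S_Sadj.
    by have := SadjD hq1 h2; rewrite -e2.
  rewrite /= e2 scalerDr opprD addrACA subrr addr0.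
  apply/dom_char; exists u; split=> //; split.
    exact (cvgNB HV u2 (cvgNZ HV cC u1)).
  have y1 := cvg_cauchy HV u1.
  have y2 := cvg_cauchy HV (cvgNB HV u2 (cvgNZ HV cC u1)).
  move=> e he.
  have [N1 hN1] := y1 _ (mulr_gt0 he he).
  have [N2 hN2] := y2 _ ltr01.
  exists (maxn N1 N2) => n m h1 h2'.
  have a1 := hN1 n m (leq_trans (leq_maxl _ _) h1) (leq_trans (leq_maxl _ _) h2').
  have a2 := hN2 n m (leq_trans (leq_maxr _ _) h1) (leq_trans (leq_maxr _ _) h2').
  have hd := SB (hu n) (hu m).
  have er := rep_shift hd (domS hd).
  rewrite /= (QB (hu n) (hu m)) in er.
  have cs := CS_Re HV ((u n).2 - (u m).2 - cC *: ((u n).1 - (u m).1)) ((u n).1 - (u m).1).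
  rewrite er -/(nrm ipK _) in cs.
  have eA : (u n).2 - (u m).2 - cC *: ((u n).1 - (u m).1) =
            (u n).2 - cC *: (u n).1 - ((u m).2 - cC *: (u m).1).
    by rewrite scalerBr subrACA'.
  rewrite eA in cs.
  have g1 := nrm_ge0 HK (Q (u n).1 - Q (u m).1).
  have g2 := nrm_ge0 HV ((u n).1 - (u m).1).
  have g3 := nrm_ge0 HV ((u n).2 - cC *: (u n).1 - ((u m).2 - cC *: (u m).1)).
  move: cs a1 a2 g1 g2 g3.
  set A := nrm ipK _; set B := nrm ip ((u n).1 - _); set D := nrm ip (_ - _ - _).
  clearbody A B D => cs a1 a2 g1 g2 g3.
  nra.
Qed.
End Main.

Unset Implicit Arguments.

Theorem theorem6p1 (R : realType) (V : lmodType R[i]) (ip : V -> V -> R[i])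
  (S : set (V * V)) (gamma c : R)
  (K : lmodType R[i]) (ipK : K -> K -> R[i]) (Q : V -> K) :
  is_hilbert ip -> is_hilbert ipK ->
  semibounded_lb ip S gamma -> c <= gamma ->
  repr_map ip ipK S c Q ->
  let SKc := kreinK ip ipK S c Q in
  let Skc := kreink ip ipK S c Q in
  let Sc := shiftr S (c%:C)%C in
  (* (a) *)
  (SKc = [set p | adjr ip ip S p /\
                  dom_formcl ip (invr Sc) (p.2 - (c%:C)%C *: p.1)] /\
   forall H : set (V * V), is_linrel H -> selfadjointr ip H -> S `<=` H ->
     ranr (shiftr H (c%:C)%C) `<=` dom_formcl ip (invr Sc) -> H = SKc) /\
  (* (b) *)
  (Skc = csum S (hatN (c%:C)%C (adjr ip ip S)) /\
   forall H : set (V * V), is_linrel H -> symmetricr ip H -> S `<=` H ->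
     ranr (shiftr H (c%:C)%C) `<=` ranr Sc -> H `<=` Skc) /\
  (* (c) *)
  (c < gamma -> SKc = csum (closure_rel ip S) (hatN (c%:C)%C (adjr ip ip S))) /\
  (c = gamma ->
     (Skc = SKc <->
      ranr Sc = closure_set ip (ranr Sc) `&` ranr (shiftr (adjr ip ip S) (c%:C)%C))) /\
  (c = gamma -> closure_set ip (ranr Sc) = ranr Sc -> Skc = SKc).
Proof.
move=> HV HK Hsb Hc Hr SKc Skc Sc.
have SL : is_linrel S by case: Hsb.
split; first split.
- exact: (partA1 HV HK SL Hr).
- by move=> H HL Hsa SH Hran; apply: (partA2 HV HK SL Hr).
split; first split.
- exact: (partb1 HV HK Hr).
- by move=> H HL Hs SH Hran; apply: (partb2 HV HK Hr).
split; first by move=> hlt; apply: (partC1 HV HK SL Hr Hsb).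
split; first by move=> _; apply: (partC2 HV HK SL Hr).
by move=> _; apply: (partC3 HV HK SL Hr).
Qed.
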